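(* Let $\alpha\ge1$ and suppose an algorithm for the maximum density subtree problem is given which, on any instance, returns a subtree whose density is at least $1/\alpha$ times the maximum density. Then the greedy algorithm (described in the context) using this algorithm is a $4\alpha$-approximation algorithm for the expanding search problem: the expanding search $\sigma^{\mathrm g}$ it returns satisfies $c(\sigma^{\mathrm g})\le 4\alpha\,c(\sigma^\star)$, where $\sigma^\star$ is an optimal expanding search.
   Context: Expanding search problem: $G=(V,E)$ is a connected graph with root $r$, probabilities $p_v\in[0,1]$ with $p_r=0$, $\sum_v p_v=1$, and edge lengths $\lambda_e>0$; $n=|V\setminus\{r\}|$. An expanding search is a sequence of edges $\sigma=(e_1,\dots,e_n)$ with $r\in e_1$ such that each $e_k$ connects an unvisited vertex to a previously visited vertex (so $\{e_1,\dots,e_k\}$ is a tree containing $r$ for every $k$). For $v\in V$, $\lambda(v,\sigma)=\sum_{i=1}^k\lambda_{e_i}$ where $e_k$ is the first edge of $\sigma$ containing $v$ (and $\lambda(r,\sigma)=0$). The search cost is $c(\sigma)=\sum_{v\in V}p_v\lambda(v,\sigma)$; the problem is to minimize it. Maximum density subtree problem: given a graph $H$ with root $r$, nonnegative vertex weights $p$ and positive edge lengths $\ell$, among subtrees $T$ of $H$ containing $r$ with positive total length, maximize the density $\rho(T)=p(V[T])/\ell(E[T])$ (sums of weights and lengths). Contraction: for $S\subseteq V$ with $r\in S$, $G/S$ has vertex set $(V\setminus S)\cup\{r\}$ and edges: all $\{v,w\}\in E$ with $v,w\in V\setminus S$ (length $\lambda_{\{v,w\}}$), and $\{r,w\}$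 for each $w\in V\setminus S$ for which $C(w,S)=\{\{v,w\}\in E: v\in S\}$ is nonempty, with length $\min_{e'\in C(w,S)}\lambda_{e'}$. Denote these lengths $\lambda^S$. Greedy algorithm: set $i\gets1$, $S\gets\{r\}$. While some $v\in V\setminus S$ has $p_v>0$: let $T_i$ be the tree returned by the given approximation algorithm for the maximum density subtree problem on $G/S$ with probabilities $(p_v)$ and lengths $\lambda^S$; let $\sigma_i$ be an arbitrary expanding search of tree $T_i$ (from $r$); set $S\gets S\cup V[T_i]$ and increment $i$. Finally let $\sigma^{\mathrm g}$ be the expanding search obtained by concatenating $\sigma_1,\sigma_2,\dots$ and replacing each edge incident to $r$ in a contracted graph by a corresponding length-minimizing edge of $G$ (vertices of zero probability left unvisited are appended arbitrarily). *)

(* Defs.v *)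
From HB Require Import structures.
From mathcomp Require Import all_boot all_order all_algebra.
Set Implicit Arguments. Unset Strict Implicit. Unset Printing Implicit Defensive.
Import Order.TTheory GRing.Theory Num.Theory.
Local Open Scope ring_scope.

(* Graphs on a finite vertex type T (V = all of T) with root r.
   An (undirected) edge is a 2-element set {set T}; an edge set is a
   {set {set T}}; lengths are a function {set T} -> R (only its values on
   edges matter). *)
Section Search.
Variables (R : realFieldType) (T : finType) (r : T).

Definition adj (F : {set {set T}}) : rel T := fun x y => [set x; y] \in F.

Definition verts (F : {set {set T}}) : {set T} := r |: \bigcup_(e in F) e.

(* F is (the edge set of) a tree containing r: connected, and acyclic
   (every edge is a bridge: its endpoints are disconnected without it). *)
Definition is_tree (F : {set {set T}}) : Prop :=
  (forall v, v \in verts F -> connect (adj F) r v) /\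
  (forall x y, [set x; y] \in F -> ~~ connect (adj (F :\ [set x; y])) x y).

Definition subtree (E' F : {set {set T}}) : Prop := F \subset E' /\ is_tree F.

Definition dens (p : T -> R) (l : {set T} -> R) (F : {set {set T}}) : R :=
  (\sum_(v in verts F) p v) / (\sum_(e in F) l e).

Definition mds_approx (alpha : R)
    (A : (T -> R) -> {set {set T}} -> ({set T} -> R) -> {set {set T}}) : Prop :=
  forall (p' : T -> R) (E' : {set {set T}}) (l' : {set T} -> R),
    (forall v, 0 <= p' v) ->
    (forall e, e \in E' -> #|e| = 2%N /\ 0 < l' e) ->
    (exists F, subtree E' F /\ F != set0) ->
    subtree E' (A p' E' l') /\ A p' E' l' != set0 /\
    (forall F', subtree E' F' -> F' != set0 ->
       dens p' l' F' <= alpha * dens p' l' (A p' E' l')).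

Definition visited (s : seq {set T}) : {set T} := r |: \bigcup_(e <- s) e.

Definition expanding (F : {set {set T}}) (U : {set T}) (s : seq {set T}) : Prop :=
  (forall k, (k < size s)%N ->
     nth set0 s k \in F /\
     exists u v, [/\ nth set0 s k = [set u; v], u \in visited (take k s)
                   & v \notin visited (take k s)]) /\
  visited s = U.

Definition lam_at (l : {set T} -> R) (s : seq {set T}) (v : T) : R :=
  if v == r then 0 else \sum_(e <- take (find (fun e : {set T} => v \in e) s).+1 s) l e.

Definition cost (l : {set T} -> R) (p : T -> R) (s : seq {set T}) : R :=
  \sum_v p v * lam_at l s v.

(* minimum of a nonempty list (0 on the empty list; never used there) *)
Definition seqmin (s : seq R) : R :=
  if s is x :: s' then foldr Num.min x s' else 0.

Section Contraction.
Variables (E : {set {set T}}) (lam : {set T} -> R).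

(* For e = {r, w} in G/S: C(w,S) = edges {v,w} of G with v in S. *)
Definition Cset (S : {set T}) (e : {set T}) : {set {set T}} :=
  [set f in E | (f :\: S == e :\ r) && (f :&: S != set0)].

Definition Econ (S : {set T}) : {set {set T}} :=
  [set e in E | [disjoint e & S]] :|:
  [set [set r; w] | w in [set w | (w \notin S) &&
        [exists f in E, (w \in f) && (f :&: S != set0)]]].

Definition lenS (S : {set T}) (e : {set T}) : R :=
  if r \in e then seqmin [seq lam f | f <- enum (Cset S e)] else lam e.

Variables (p : T -> R)
  (A : (T -> R) -> {set {set T}} -> ({set T} -> R) -> {set {set T}}).

Definition guard (S : {set T}) : bool := [exists v, (v \notin S) && (0 < p v)].

Definition gtree (S : {set T}) : {set {set T}} := A p (Econ S) (lenS S).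

Definition gstep (S : {set T}) : {set T} :=
  if guard S then S :|: verts (gtree S) else S.

Definition Siter (i : nat) : {set T} := iter i gstep [set r].

Definition replaced (S : {set T}) (rho tau : seq {set T}) : Prop :=
  size tau = size rho /\
  forall k, (k < size rho)%N ->
    (r \in nth set0 rho k ->
       nth set0 tau k \in Cset S (nth set0 rho k) /\
       lam (nth set0 tau k) = lenS S (nth set0 rho k)) /\
    (r \notin nth set0 rho k -> nth set0 tau k = nth set0 rho k).

(* sigma is a possible output of the greedy algorithm: the loop runs exactly
   k times, sigma is the concatenation of the replaced searches sigma_i of the
   trees T_i, followed by an arbitrary tail. *)
Definition greedy_output (sigma : seq {set T}) : Prop :=
  exists (k : nat) (taus : seq (seq {set T})) (tail : seq {set T}),
    [/\ size taus = k,
        (forall i, (i < k)%N -> guard (Siter i)),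
        ~~ guard (Siter k),
        sigma = flatten taus ++ tail
      & forall i, (i < k)%N ->
          exists rho, expanding (gtree (Siter i)) (verts (gtree (Siter i))) rho
                      /\ replaced (Siter i) rho (nth [::] taus i)].

End Contraction.
End Search.

(* Main.v *)
Require Import Defs.
From HB Require Import structures.
From mathcomp Require Import all_boot all_order all_algebra.
From mathcomp Require Import ring lra.
Set Implicit Arguments. Unset Strict Implicit. Unset Printing Implicit Defensive.
Import Order.TTheory GRing.Theory Num.Theory.
Local Open Scope ring_scope.


Section Seqs.
Variables (T : finType) (r : T).

Definition xp (s : seq {set T}) : Prop :=
  forall k, (k < size s)%N -> exists u v,
    [/\ nth set0 s k = [set u; v], u \in visited r (take k s)
      & v \notin visited r (take k s)].

Definition xstep (s : seq {set T}) (e : {set T}) : Prop :=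
  exists u v, [/\ e = [set u; v], u \in visited r s & v \notin visited r s].

Lemma visited_rcons s e : visited r (rcons s e) = visited r s :|: e.
Proof. by rewrite /visited -cats1 big_cat big_seq1 /= setUA. Qed.

Lemma visited_nil : visited r [::] = [set r].
Proof. by rewrite /visited big_nil setU0. Qed.

Lemma in_bigcup_seq x (s : seq {set T}) :
  (x \in \bigcup_(e <- s) e) = has (fun e : {set T} => x \in e) s.
Proof. elim: s => [|e s IH]; by rewrite ?big_nil ?big_cons ?inE //= IH. Qed.

Lemma root_visited s : r \in visited r s.
Proof. by rewrite /visited setU11. Qed.

Lemma sub_visited (s : seq {set T}) (e : {set T}) (x : T) : e \in s -> x \in e -> x \in visited r s.
Proof.
move=> es xe; rewrite /visited in_setU in_bigcup_seq; apply/orP; right.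
by apply/hasP; exists e.
Qed.

Lemma xp_rcons s e : xp (rcons s e) <-> xp s /\ xstep s e.
Proof.
split.
- move=> H; split.
  + move=> k ks; have ks' : (k < size (rcons s e))%N by rewrite size_rcons ltnS ltnW.
    have [u [v [H1 H2 H3]]] := H k ks'.
    rewrite nth_rcons ks in H1; rewrite -cats1 takel_cat ?(ltnW ks) // in H2 H3.
    by exists u, v; split.
  + have ks : (size s < size (rcons s e))%N by rewrite size_rcons.
    have [u [v [H1 H2 H3]]] := H _ ks.
    rewrite nth_rcons ltnn eqxx in H1; rewrite -cats1 take_size_cat // in H2 H3.
    by exists u, v; split.
- case=> H [u [v [H1 H2 H3]]] k; rewrite size_rcons ltnS leq_eqVlt => /orP[/eqP ->|ks].
  + exists u, v; rewrite nth_rcons ltnn eqxx -cats1 take_size_cat //.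
  + have [u' [v' [H1' H2' H3']]] := H k ks.
    exists u', v'; rewrite nth_rcons ks -cats1 takel_cat ?(ltnW ks) //.
Qed.

Lemma disjP (A B : {set T}) : reflect (forall x, x \in A -> x \in B -> False) [disjoint A & B].
Proof.
rewrite disjoints_subset; apply: (iffP subsetP) => H x xA.
- by move=> xB; move: (H x xA); rewrite inE xB.
- by rewrite inE; apply/negP; exact: H x xA.
Qed.

Lemma xp_nil : xp [::].
Proof. by []. Qed.

Lemma xp_take s j : xp s -> xp (take j s).
Proof.
move=> H k; rewrite size_take_min leq_min => /andP[kj ks].
have [u [v [H1 H2 H3]]] := H k ks.
by exists u, v; rewrite nth_take // take_takel ?(ltnW kj).
Qed.

Lemma set2_eq (z z' u w : T) : u != w -> [set z; z'] = [set u; w] ->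
  (z = u /\ z' = w) \/ (z = w /\ z' = u).
Proof.
move=> uw H.
have zin : z \in [set u; w] by rewrite -H set21.
have z'in : z' \in [set u; w] by rewrite -H set22.
have win : w \in [set z; z'] by rewrite H set22.
have uin : u \in [set z; z'] by rewrite H set21.
case/set2P: zin => Ez; case/set2P: z'in => Ez'; rewrite Ez Ez' in win uin *; auto.
- by move: win => /set2P [] E; move: uw; rewrite E eqxx.
- by move: uin => /set2P [] E; move: uw; rewrite E eqxx.
Qed.

Lemma xp_uniq s : xp s -> uniq s.
Proof.
elim/last_ind: s => [//|s e IH] /xp_rcons [H [u [v [-> _ vn]]]].
rewrite rcons_uniq IH // andbT; apply/negP => ein.
by move: vn; rewrite (sub_visited ein) // set22.
Qed.

Lemma adj_sym (F : {set {set T}}) : symmetric (adj F).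
Proof. by move=> x y; rewrite /adj setUC. Qed.

Lemma conn_sym (F : {set {set T}}) x y : connect (adj F) x y = connect (adj F) y x.
Proof. exact: (sym_connect_sym (@adj_sym F)). Qed.

Lemma closed_conn (G : rel T) (C : {set T}) x y :
  (forall z z', z \in C -> G z z' -> z' \in C) -> x \in C -> connect G x y -> y \in C.
Proof.
move=> HC xC /connectP [p pth ->]; elim: p x xC pth => [|z p IH] x xC //=.
by case/andP => Gxz pz; apply: (IH z) => //; apply: HC Gxz.
Qed.

Lemma conn_iso (G : rel T) w a : (forall b, ~~ G w b) -> connect G w a -> a = w.
Proof.
move=> Hw /connectP [[|b p]] /=; first by move=> _ ->.
by case/andP => H; rewrite (negbTE (Hw b)) in H.
Qed.

Lemma adj_mono (F F' : {set {set T}}) x y : F \subset F' ->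
  connect (adj F) x y -> connect (adj F') x y.
Proof.
move=> sub; apply: connect_sub => a b H; apply: connect1.
by rewrite /adj (subsetP sub).
Qed.

Lemma leaf_conn (G : {set {set T}}) u w x y :
  u != w -> (forall b, [set w; b] \notin G) -> x != w -> y != w ->
  connect (adj ([set u; w] |: G)) x y -> connect (adj G) x y.
Proof.
move=> uw iso xw yw.
have isoG : forall b, ~~ adj G w b by move=> b; apply: iso.
set C := [set z | connect (adj G) x z || ((z == w) && connect (adj G) x u)].
move=> H.
have : y \in C.
  apply: (closed_conn _ _ H); last by rewrite inE connect0.
  move=> z z'; rewrite !inE /adj in_setU1 => zC /orP[/eqP E|Gz].
  + case: (set2_eq uw E) => [[Ez Ez']|[Ez Ez']]; rewrite Ez Ez' in zC *.
    * move: zC; rewrite (negbTE uw) /= orbF => ->; by rewrite eqxx orbT.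
    * move: zC; rewrite eqxx /= => /orP[|->]; last by [].
      rewrite (conn_sym G x w).
      by move/(conn_iso isoG) => E'; rewrite E' eqxx in xw.
  + move: zC => /orP[cz|/andP[/eqP zw _]].
    * by rewrite (connect_trans cz (connect1 Gz)).
    * by move: Gz; rewrite zw /adj (negbTE (iso z')).
by rewrite inE (negbTE yw) /= orbF.
Qed.

Lemma verts_seq s : verts r [set e in s] = visited r s.
Proof.
rewrite /verts /visited; congr (_ |: _); apply/setP => x.
rewrite in_bigcup_seq; apply/bigcupP/hasP => [[e]|[e]]; rewrite ?inE => es xe;
  by exists e; rewrite ?inE.
Qed.

Lemma tree_xp s : xp s -> is_tree r [set e in s].
Proof.
rewrite /is_tree verts_seq.
elim/last_ind: s => [|s e IH].
  move=> _; split; first by move=> v; rewrite visited_nil inE => /eqP ->.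
  by move=> x y; rewrite inE.
move=> /xp_rcons [Hs [u [w [ee uv wv]]]].
have [IH1 IH2] := IH Hs.
have Fe : [set e' in rcons s e] = e |: [set e' in s].
  by apply/setP => z; rewrite !inE mem_rcons in_cons.
have uw : u != w by apply: contraNneq wv => <-.
have eF : e \notin [set e' in s].
  by rewrite inE; apply/negP => H; move: wv; rewrite (sub_visited H) // ee set22.
have isoF : forall b, [set w; b] \notin [set e' in s].
  move=> b; rewrite inE; apply/negP => H; move: wv; rewrite (sub_visited H) //.
  by rewrite set21.
have sub : [set e' in s] \subset [set e' in rcons s e] by rewrite Fe subsetUr.
split.
- move=> v; rewrite visited_rcons in_setU => /orP[vs|].
  + exact: adj_mono sub (IH1 v vs).
  + move=> ve; have : v \in [set u; w] by rewrite -ee.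
    case/set2P => ->; first exact: adj_mono sub (IH1 u uv).
    apply: connect_trans (adj_mono sub (IH1 u uv)) _.
    by apply: connect1; rewrite /adj Fe ee setU11.
- move=> x y; rewrite Fe in_setU1 => /orP[/eqP E|xyF].
  + rewrite E setU1K //.
    have isoG : forall b, ~~ adj [set e' in s] w b by move=> b; apply: isoF.
    rewrite ee in E; case: (set2_eq uw E) => [[-> ->]|[-> ->]].
    * apply/negP; rewrite conn_sym.
      by move/(conn_iso isoG) => E'; rewrite E' eqxx in uw.
    * by apply/negP => /(conn_iso isoG) E'; rewrite E' eqxx in uw.
  + have exy : e != [set x; y] by apply: contraNneq eF => ->.
    have -> : (e |: [set e' in s]) :\ [set x; y] = e |: ([set e' in s] :\ [set x; y]).
      by apply/setP => z; rewrite !inE; case: (z =P e) => [->|]; rewrite ?exy.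
    apply/negP; rewrite ee => /leaf_conn H.
    have xw : x != w.
      by apply: contraNneq wv => <-; move: xyF; rewrite inE => /sub_visited; apply; rewrite set21.
    have yw : y != w.
      by apply: contraNneq wv => <-; move: xyF; rewrite inE => /sub_visited; apply; rewrite set22.
    have iso' : forall b, [set w; b] \notin [set e' in s] :\ [set x; y].
      by move=> b; rewrite in_setD1 (negbTE (isoF b)) andbF.
    by move: (IH2 x y xyF); rewrite (H uw iso' xw yw).
Qed.

End Seqs.


Section Contr.
Variables (R : realFieldType) (T : finType) (r : T) (E : {set {set T}}) (lam : {set T} -> R).

Lemma seqmin_le (s : seq R) x : x \in s -> seqmin s <= x.
Proof.
case: s => [//|y s] /=.
have H : foldr Num.min y s <= y /\ forall z, z \in s -> foldr Num.min y s <= z.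
  elim: s => [|a s [IH1 IH2]] /=; first by split=> [|z]; rewrite ?lexx ?in_nil.
  split; first by rewrite ge_min IH1 orbT.
  by move=> z; rewrite in_cons => /orP[/eqP ->|zs]; rewrite ge_min; [rewrite lexx | rewrite IH2 ?orbT].
by rewrite in_cons => /orP[/eqP ->|]; [case: H | case: H => _; apply].
Qed.

Lemma seqmin_gt0 (s : seq R) : s != [::] -> (forall x, x \in s -> 0 < x) -> 0 < seqmin s.
Proof.
case: s => [//|y s] _ /= H.
elim: s H => [|a s IH] H /=; first by apply: H; rewrite inE.
rewrite lt_min; apply/andP; split; first by apply: H; rewrite !inE eqxx orbT.
apply: IH => z zin; apply: H; move: zin; rewrite !inE => /orP[->|->]; by rewrite ?orbT.
Qed.

Lemma seqmin_ge0 (s : seq R) : (forall x, x \in s -> 0 <= x) -> 0 <= seqmin s.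
Proof.
case: s => [//|y s] /= H.
elim: s H => [|a s IH] H /=; first by apply: H; rewrite inE.
rewrite le_min; apply/andP; split; first by apply: H; rewrite !inE eqxx orbT.
apply: IH => z zin; apply: H; move: zin; rewrite !inE => /orP[->|->]; by rewrite ?orbT.
Qed.

Lemma card2_eq (f : {set T}) a b : #|f| = 2%N -> a \in f -> b \in f -> a != b -> f = [set a; b].
Proof.
move=> cf af bf ab; apply/eqP; rewrite eq_sym eqEcard cf cards2 ab leqnn andbT.
by apply/subsetP => z /set2P [] ->.
Qed.

Hypotheses (E2 : forall e, e \in E -> #|e| = 2%N) (Epos : forall e, e \in E -> 0 < lam e).

Lemma Econ_pos (S e : {set T}) : r \in S -> e \in Econ r E S -> #|e| = 2%N /\ 0 < lenS r E lam S e.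
Proof.
move=> rS; rewrite /Econ in_setU => /orP[|].
- rewrite inE => /andP[eE dis].
  have rne : r \notin e by apply: contraTN dis => re; apply/negP => /disjP H; exact: H r re rS.
  by rewrite /lenS (negbTE rne) E2 // Epos.
- case/imsetP => w; rewrite inE => /andP[wS /existsP [f /and3P[fE wf fS]]] ->.
  have rw : r != w by apply: contraNneq wS => <-.
  split; first by rewrite cards2 rw.
  rewrite /lenS set21; apply: seqmin_gt0.
  - have [x] := set0Pn _ fS; rewrite inE => /andP[xf xS].
    have xw : x != w by apply: contraNneq wS => <-.
    have fe : f = [set w; x] by apply: card2_eq => //; [apply: E2 | rewrite eq_sym].
    have : f \in Cset r E S [set r; w].
      rewrite inE fE fS andbT; apply/eqP/setP => z; rewrite fe !inE.
      case: (z =P w) => [->|zw]; first by rewrite wS (eq_sym w r) rw !orbT.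
      rewrite orbF; case: (z =P r) => [->|_]; first by rewrite rS.
      by case: (z =P x) => [->|]; rewrite ?xS ?andbF.
    rewrite -mem_enum => H; apply/eqP => H'; move: H'.
    by case: (enum _) H.
  - move=> x /mapP [f' ]; rewrite mem_enum inE => /andP[f'E _] ->; exact: Epos.
Qed.

Lemma lenS_ge0 (S e : {set T}) : r \in S -> e \in Econ r E S -> 0 <= lenS r E lam S e.
Proof. by move=> rS eS; have [_ /ltW] := Econ_pos rS eS. Qed.

Variable S : {set T}.
Hypothesis rS : r \in S.

Definition gmap (e : {set T}) : {set T} := if [disjoint e & S] then e else r |: (e :\: S).

Definition cstep (acc : {set T} * seq {set T}) (e : {set T}) :=
  if e \subset S :|: acc.1 then (acc.1 :|: e, acc.2) else (acc.1 :|: e, rcons acc.2 (gmap e)).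

Definition contr (s : seq {set T}) := foldl cstep ([set r], [::]) s.

Lemma sum_rcons (s : seq {set T}) e (f : {set T} -> R) :
  \sum_(x <- rcons s e) f x = \sum_(x <- s) f x + f e.
Proof. by rewrite -cats1 big_cat big_seq1. Qed.

Lemma contr_inv s : xp r s -> {subset s <= E} ->
  [/\ (contr s).1 = visited r s, xp r (contr s).2,
      visited r (contr s).2 = r |: (visited r s :\: S),
      {subset (contr s).2 <= Econ r E S}
    & \sum_(e <- (contr s).2) lenS r E lam S e <= \sum_(e <- s) lam e].
Proof.
elim/last_ind: s => [|s e IH].
  move=> _ _; rewrite /contr /= visited_nil; split => //.
  - by apply/setP => z; rewrite !inE; case: (z =P r) => /= _; rewrite ?andbF.
  - by rewrite !big_nil.
move=> /xp_rcons [Hs [u [w [ee uV wV]]]] sub.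
have subs : {subset s <= E} by move=> x xs; apply: sub; rewrite mem_rcons in_cons xs orbT.
have eE : e \in E by apply: sub; rewrite mem_rcons in_cons eqxx.
have [I1 I2 I3 I4 I5] := IH Hs subs.
rewrite /contr foldl_rcons -/(contr s) /cstep I1 visited_rcons.
have lam0 : 0 <= lam e by apply/ltW/Epos.
case: ifP => [esub|enot] /=.
- split => //.
  + rewrite I3; congr (_ |: _); apply/setP => z; rewrite !inE.
    case ze: (z \in e) => /=; last by rewrite orbF.
    have := subsetP esub z ze; rewrite !inE.
    by case: (z \in S); rewrite ?andbF //= => ->.
  + by rewrite sum_rcons -[X in X <= _]addr0 lerD.
- have wS : w \notin S.
    apply: contraFN enot => wS; apply/subsetP => z; rewrite ee => /set2P [] ->; rewrite in_setU ?uV ?wS ?orbT //.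
  have rw : r != w by apply: contraNneq wS => <-.
  have uw : u != w by apply: contraNneq wV => <-.
  set u' := if u \in S then r else u.
  have ge : gmap e = [set u'; w].
    rewrite /gmap /u' ee; case uS: (u \in S).
    + have -> : [disjoint [set u; w] & S] = false.
        by apply/negP => /disjP H; apply: (H u); rewrite ?set21.
      apply/setP => z; rewrite !inE; case: (z =P r) => [->|zr] //=.
      case: (z =P u) => [->|_]; first by rewrite uS (negbTE uw).
      by case: (z =P w) => [->|] /=; rewrite ?wS ?andbF.
    + have -> : [disjoint [set u; w] & S].
        by apply/disjP => z /set2P [] ->; rewrite ?uS ?(negbTE wS).
      by [].
  have u'V : u' \in visited r (contr s).2.
    by rewrite I3 /u' in_setU1 in_setD; case: ifP => uS; rewrite ?eqxx ?uV ?uS ?orbT.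
  have wV' : w \notin visited r (contr s).2.
    by rewrite I3 in_setU1 in_setD (negbTE wV) andbF orbF (eq_sym w r).
  split.
  + by [].
  + by apply/xp_rcons; split => //; exists u', w; split.
  + rewrite visited_rcons I3 ge ee; apply/setP => z; rewrite !inE.
    case: (z =P r) => [->|zr] //=.
    case: (z =P w) => [->|zw]; first by rewrite wS !orbT.
    rewrite !orbF /u'; case: (z =P u) => [Ezu|zu].
    * move: zr; rewrite Ezu => zr; case uS: (u \in S) => /=.
      - exact: (introF eqP zr).
      - by rewrite eqxx !orbT.
    * by case: ifP => _; rewrite ?(introF eqP zr) ?(introF eqP zu) !orbF.
  + move=> x; rewrite mem_rcons in_cons => /orP[/eqP ->|]; last exact: I4.
    rewrite ge /u' /Econ in_setU; case: ifP => uS.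
    * apply/orP; right; apply/imsetP; exists w => //; rewrite inE wS /=.
      by apply/existsP; exists e; rewrite eE ee set22 /=; apply/set0Pn; exists u; rewrite !inE eqxx.
    * apply/orP; left; rewrite inE -ee eE /= ee.
      by apply/disjP => z /set2P [] ->; rewrite ?uS ?(negbTE wS).
  + rewrite !sum_rcons lerD //.
    rewrite ge /u'; case uS: (u \in S).
    * rewrite /lenS set21; apply: seqmin_le; apply/mapP; exists e => //.
      rewrite mem_enum inE eE /=; apply/andP; split.
      - apply/eqP/setP => z; rewrite ee !inE; case: (z =P r) => [->|zr] /=.
        + by rewrite rS.
        + case: (z =P u) => [->|_]; first by rewrite uS (negbTE uw).
          by case: (z =P w) => [->|] /=; rewrite ?wS ?andbF.
      - by apply/set0Pn; exists u; rewrite ee in_setI set21 uS.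
    * have rne : r \notin [set u; w].
        by apply/set2P => [[E1|E1]]; [move: uS; rewrite -E1 rS | move: rw; rewrite E1 eqxx].
      by rewrite /lenS (negbTE rne) -ee.
Qed.

Lemma contract_tree s : xp r s -> {subset s <= E} ->
  exists F, [/\ subtree r (Econ r E S) F, verts r F = r |: (visited r s :\: S)
    & \sum_(e in F) lenS r E lam S e <= \sum_(e <- s) lam e].
Proof.
move=> Hs sub; have [_ I2 I3 I4 I5] := contr_inv Hs sub.
exists [set e in (contr s).2]; split.
- split; last exact: tree_xp.
  by apply/subsetP => x; rewrite inE; apply: I4.
- by rewrite verts_seq.
- apply: le_trans I5; rewrite (big_uniq _ (xp_uniq I2)).
  by rewrite le_eqVlt; apply/orP; left; apply/eqP; apply: eq_bigl => x; rewrite inE.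
Qed.

End Contr.


Section Abstract.
Variables (R : realFieldType) (V : finType) (p lm : V -> R) (k : nat) (a Rr : nat -> R).
Hypotheses (p0 : forall v, 0 <= p v) (lm0 : forall v, 0 <= lm v) (a0 : forall j, 0 <= a j)
  (Rdec : forall j, (j < k)%N -> Rr j.+1 <= Rr j) (Rk0 : 0 <= Rr k)
  (Rmass : forall j, (j < k)%N -> Rr j <= 2 * \sum_(v | a j < lm v) p v).

Fixpoint u j := match j with 0 => a 0 | j'.+1 => Num.max (u j') (a j'.+1) end.
Definition U j := if j is j'.+1 then u j' else 0.
Definition mass t := \sum_(v | t < lm v) p v.

Lemma a_le_u j : a j <= u j.
Proof. by case: j => [|j] //=; rewrite le_max lexx orbT. Qed.

Lemma U_le_u j : U j <= u j.
Proof. by case: j => [|j] /=; [exact: a0 | rewrite le_max lexx]. Qed.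

Lemma U_ge0 j : 0 <= U j.
Proof. by case: j => [|j] //=; apply: le_trans (a_le_u j); apply: a0. Qed.

Lemma mass_anti t t' : t <= t' -> mass t' <= mass t.
Proof.
move=> tt; rewrite /mass [X in _ <= X]big_mkcond [X in X <= _]big_mkcond /=.
apply: ler_sum => v _; case: ifP => h1; case: ifP => h2 //; try exact: p0.
by move: h2; rewrite (le_lt_trans tt h1).
Qed.

Lemma Rmass_u j : (j < k)%N -> Rr j <= 2 * mass (u j).
Proof.
elim: j => [|j IH] jk /=; first exact: Rmass.
have [h|h] := leP (u j) (a j.+1).
- by apply: Rmass.
- apply: le_trans (Rdec (ltnW jk)) _; exact: IH (ltnW jk).
Qed.

Lemma abel n : \sum_(j < n) (Rr j - Rr j.+1) * u j + Rr n * U n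
             = \sum_(j < n) Rr j * (u j - U j).
Proof.
elim: n => [|n IH]; first by rewrite !big_ord0 /= mulr0 addr0.
rewrite !big_ord_recr /= -IH.
ring.
Qed.

Lemma per_vertex x n : 0 <= x ->
  \sum_(j < n) (if u j < x then u j - U j else 0) <= x /\
  \sum_(j < n) (if u j < x then u j - U j else 0) <= U n.
Proof.
move=> x0; elim: n => [|n [IH1 IH2]]; first by rewrite big_ord0 /= lexx.
rewrite big_ord_recr /=; case: ifP => h.
- split; last by lra.
  by lra.
- rewrite addr0; split => //; apply: le_trans IH2 _; exact: U_le_u.
Qed.

Lemma abstract_bound :
  \sum_(j < k) (Rr j - Rr j.+1) * a j <= 2 * \sum_v p v * lm v.
Proof.
apply: (@le_trans _ _ (\sum_(j < k) (Rr j - Rr j.+1) * u j)).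
  apply: ler_sum => j _; apply: ler_wpM2l; last exact: a_le_u.
  by rewrite subr_ge0; apply: Rdec.
apply: (@le_trans _ _ (\sum_(j < k) (Rr j - Rr j.+1) * u j + Rr k * U k)).
  by rewrite lerDl; apply: mulr_ge0 => //; apply: U_ge0.
rewrite abel.
apply: (@le_trans _ _ (\sum_(j < k) 2 * mass (u j) * (u j - U j))).
  apply: ler_sum => j _; apply: ler_wpM2r; first by rewrite subr_ge0 U_le_u.
  exact: Rmass_u.
have -> : \sum_(j < k) 2 * mass (u j) * (u j - U j)
   = 2 * \sum_v p v * \sum_(j < k) (if u j < lm v then u j - U j else 0).
  under eq_bigr => j _ do rewrite -mulrA; rewrite -mulr_sumr; congr (_ * _).
  rewrite /mass.
  under eq_bigr => j _ do rewrite big_distrl big_mkcond /=.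
  rewrite exchange_big /=; apply: eq_bigr => v _.
  rewrite big_distrr /=; apply: eq_bigr => j _.
  by case: ifP; rewrite ?mulr0 ?mul0r.
rewrite ler_pM2l //; apply: ler_sum => v _; apply: ler_wpM2l => //.
by case: (per_vertex k (lm0 v)).
Qed.

End Abstract.


Section Main.
Variables (R : realFieldType) (T : finType) (r : T) (E : {set {set T}}) (lam : {set T} -> R)
  (p : T -> R) (alpha : R)
  (A : (T -> R) -> {set {set T}} -> ({set T} -> R) -> {set {set T}}).
Hypotheses (E2 : forall e, e \in E -> #|e| = 2%N) (Epos : forall e, e \in E -> 0 < lam e)
  (p0 : forall v, 0 <= p v) (pr0 : p r = 0) (alpha1 : 1 <= alpha)
  (mds : mds_approx r alpha A).
Variable sigma : seq {set T}.
Hypothesis Hex : expanding r E [set: T] sigma.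

Local Notation Sj j := (Siter r E lam p A j).
Local Notation G S := (gtree r E lam p A S).
Local Notation L S := (\sum_(e in G S) lenS r E lam S e).
Local Notation M S := (\sum_(v in verts r (G S)) p v).
Local Notation Rm S := (\sum_(v | v \notin S) p v).
Local Notation ls v := (lam_at r lam sigma v).

Lemma expanding_xp F U s : expanding r F U s -> [/\ xp r s, {subset s <= F} & visited r s = U].
Proof.
case=> H1 H2; split => //.
- by move=> k ks; have [_ h] := H1 k ks; exact: h.
- move=> e es; have ie : (index e s < size s)%N by rewrite index_mem.
  by have [h _] := H1 _ ie; rewrite nth_index in h.
Qed.

Lemma SjS j : Sj j.+1 = gstep r E lam p A (Sj j).
Proof. by rewrite /Siter iterS. Qed.

Lemma Sj_sub j : Sj j \subset Sj j.+1.
Proof. by rewrite SjS /gstep; case: ifP => _; rewrite ?subsetUl ?subxx. Qed.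

Lemma Sj_mono i j : (i <= j)%N -> Sj i \subset Sj j.
Proof.
elim: j => [|j IH]; first by rewrite leqn0 => /eqP ->.
rewrite leq_eqVlt => /orP[/eqP ->|]; first exact: subxx.
by rewrite ltnS => /IH h; apply: subset_trans h (Sj_sub j).
Qed.

Lemma Sj_r j : r \in Sj j.
Proof.
elim: j => [|j IH]; first by rewrite /Siter /= set11.
exact: subsetP (Sj_sub j) _ IH.
Qed.

Lemma verts0 : verts r set0 = [set r].
Proof. by rewrite /verts big_set0 setU0. Qed.

Lemma sum_pos (S : {set T}) (F : {set {set T}}) : r \in S -> F \subset Econ r E S -> F != set0 ->
  0 < \sum_(e in F) lenS r E lam S e.
Proof.
move=> rS sub /set0Pn [e eF].
rewrite (bigD1 e) //=; apply: (@lt_le_trans _ _ (lenS r E lam S e)).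
  by have [] := Econ_pos E2 Epos rS (subsetP sub e eF).
rewrite lerDl; apply: sumr_ge0 => x /andP[xF _]. have := subsetP sub x xF. move=> h. exact: (lenS_ge0 E2 Epos rS h).
Qed.

Lemma sig_xp : [/\ xp r sigma, {subset sigma <= E} & visited r sigma = [set: T]].
Proof. exact: expanding_xp Hex. Qed.

Lemma phase (S : {set T}) : r \in S -> guard p S ->
  [/\ subtree r (Econ r E S) (G S), G S != set0 &
    forall F', subtree r (Econ r E S) F' -> F' != set0 ->
      dens r p (lenS r E lam S) F' <= alpha * dens r p (lenS r E lam S) (G S)].
Proof.
move=> rS /existsP [v /andP[vS pv]].
have [sx ss sv] := sig_xp.
have [||] := mds (E' := Econ r E S) (l' := lenS r E lam S) p0.
- by move=> e eS; apply: Econ_pos.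
- have [F [sF vF _]] := contract_tree Epos rS sx ss.
  exists F; split => //; apply/eqP => F0; move: vF; rewrite F0 verts0 sv => /setP /(_ v).
  rewrite !inE vS /=; case: (v =P r) => // vr; by move: vS; rewrite vr rS.
- by move=> h1 [h2 h3]; split.
Qed.

Lemma PC (S : {set T}) (a : R) : r \in S -> guard p S -> 0 <= a ->
  (\sum_(v | (v \notin S) && (ls v <= a)) p v) * L S <= alpha * M S * a.
Proof.
move=> rS gS a0.
have [sub Gn dG] := phase rS gS.
have [sx ss sv] := sig_xp.
set Q := \sum_(v | _) p v.
have L0 : 0 < L S := sum_pos rS (proj1 sub) Gn.
have M0 : 0 <= M S by apply: sumr_ge0.
have Q0 : 0 <= Q by apply: sumr_ge0.
set Pset := [set v | (v != r) && (ls v <= a)].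
set J := \max_(v in Pset) (find (fun e : {set T} => v \in e) sigma).+1.
have xJ := xp_take (j := J) sx.
have sJ : {subset take J sigma <= E} by move=> e /mem_take; apply: ss.
have [F [sF vF lF]] := contract_tree Epos rS xJ sJ.
have inF : forall v, v \notin S -> ls v <= a -> v \in verts r F.
  move=> v vS la; have vr : v != r by apply: contraNneq vS => ->.
  have hv : has (fun e : {set T} => v \in e) sigma.
    by rewrite -in_bigcup_seq; move: (in_setT v); rewrite -sv /visited in_setU1 (negbTE vr).
  have fJ : ((find (fun e : {set T} => v \in e) sigma).+1 <= J)%N.
    by rewrite /J; apply: leq_bigmax_cond; rewrite inE vr la.
  by rewrite vF in_setU1 in_setD vS /= /visited in_setU1 in_bigcup_seq (has_take _ hv) fJ !orbT.
have lJ : \sum_(e <- take J sigma) lam e <= a.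
  case: (set_0Vmem Pset) => [P0 | [v0 v0P]].
  - by rewrite /J P0 big_set0 take0 big_nil.
  - have Pn : (0 < #|Pset|)%N by rewrite card_gt0; apply/set0Pn; exists v0.
    have [v1 v1P] := eq_bigmax_cond (fun v => (find (fun e : {set T} => v \in e) sigma).+1) Pn. rewrite -/J => ->.
    move: v1P; rewrite inE => /andP[v1r]; rewrite /lam_at (negbTE v1r) //.
have lFa := le_trans lF lJ.
have [Qz|Qp] := eqVneq Q 0.
  by rewrite Qz mul0r; apply: mulr_ge0 => //; apply: mulr_ge0 => //; apply: le_trans ler01 alpha1.
case: (pickP (fun v => (v \notin S) && (ls v <= a))) => [v /andP[vS la] | none]; last first.
  by move: Qp; rewrite /Q big_pred0 ?eqxx.
have Fn : F != set0.
  apply/eqP => F0; have := inF v vS la; rewrite F0 verts0 inE => /eqP vr.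
  by move: vS; rewrite vr rS.
have lF0 : 0 < \sum_(e in F) lenS r E lam S e := sum_pos rS (proj1 sF) Fn.
have hd := dG F sF Fn; rewrite /dens in hd.
have QN : Q <= \sum_(v in verts r F) p v.
  rewrite /Q big_mkcond [X in _ <= X]big_mkcond /=; apply: ler_sum => x _.
  case: ifP => [/andP[xS xa]|_]; first by rewrite (inF x xS xa).
  by case: ifP.
set NF := \sum_(v in verts r F) p v in QN hd.
set lenF := \sum_(e in F) lenS r E lam S e in lF0 lFa hd.
set LL := L S in L0 hd *.
set MM := M S in M0 hd *.
have e1 : NF = (NF / lenF) * lenF by rewrite divfK // gt_eqF.
have e2 : MM = (MM / LL) * LL by rewrite divfK // gt_eqF.
have d10 : 0 <= NF / lenF by apply: divr_ge0 => //; [apply: le_trans QN | apply: ltW].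
have d20 : 0 <= MM / LL by apply: divr_ge0 => //; apply: ltW.
have a0' : 0 <= alpha by apply: le_trans ler01 alpha1.
set d1 := NF / lenF in e1 d10 hd.
set d2 := MM / LL in e2 hd d20.
rewrite e2; rewrite e1 in QN.
have h1 : Q * LL <= d1 * lenF * LL := ler_wpM2r (ltW L0) QN.
have h2 : d1 * lenF * LL <= alpha * d2 * lenF * LL.
  exact: (ler_wpM2r (ltW L0) (ler_wpM2r (ltW lF0) hd)).
have h3 : alpha * d2 * lenF * LL <= alpha * d2 * a * LL.
  exact: (ler_wpM2r (ltW L0) (ler_wpM2l (mulr_ge0 a0' d20) lFa)).
apply: le_trans h1 (le_trans h2 (le_trans h3 _)).
by rewrite le_eqVlt; apply/orP; left; apply/eqP; ring.
Qed.

Lemma lamat_ge0 s v : {subset s <= E} -> 0 <= lam_at r lam s v.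
Proof.
move=> ss; rewrite /lam_at; case: ifP => // _.
by rewrite big_seq; apply: sumr_ge0 => e /mem_take /ss /Epos /ltW.
Qed.

Lemma sum_subset (I : finType) (P Q : pred I) (f : I -> R) :
  {subset P <= Q} -> (forall x, x \in Q -> 0 <= f x) ->
  \sum_(x in P) f x <= \sum_(x in Q) f x.
Proof.
move=> PQ f0; rewrite big_mkcond [X in _ <= X]big_mkcond /=; apply: ler_sum => x _.
case: ifP => xP; first by rewrite (PQ x xP).
by case: ifP => // xQ; apply: f0.
Qed.

Lemma ML_pos (S : {set T}) : r \in S -> guard p S -> 0 < M S /\ 0 < L S.
Proof.
move=> rS gS; have [sub Gn _] := phase rS gS.
have L0 : 0 < L S := sum_pos rS (proj1 sub) Gn.
split => //.
have [sx ss sv] := sig_xp.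
move: (gS) => /existsP [v /andP[vS pv]].
have la0 := lamat_ge0 v ss.
have H := PC rS gS la0.
set Q := \sum_(x | _) p x in H.
have Qp : 0 < Q.
  rewrite /Q (bigD1 v) /=; last by rewrite vS lexx.
  apply: lt_le_trans (_ : p v <= _); first by [].
  by rewrite lerDl; apply: sumr_ge0.
have := mulr_gt0 Qp L0 => h; have h' := lt_le_trans h H.
have M0 : 0 <= M S by apply: sumr_ge0.
rewrite lt_neqAle M0 andbT eq_sym; apply/negP => /eqP Mz.
by move: h'; rewrite Mz mulr0 mul0r ltxx.
Qed.

Lemma vertsG_S (S : {set T}) v : r \in S -> guard p S ->
  v \in verts r (G S) -> v \in S -> v = r.
Proof.
move=> rS gS; have [sub _ _] := phase rS gS.
rewrite /verts in_setU1 => /orP[/eqP //|/bigcupP [e eG ve]] vS.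
have := subsetP (proj1 sub) e eG; rewrite /Econ in_setU => /orP[|].
- by rewrite inE => /andP[_ /disjP dis]; case: (dis v ve vS).
- case/imsetP => w; rewrite inE => /andP[wS _] ee; move: ve; rewrite ee => /set2P [//|vw].
  by move: wS; rewrite -vw vS.
Qed.

Lemma RmM (S : {set T}) : r \in S -> guard p S ->
  Rm S - Rm (S :|: verts r (G S)) = M S.
Proof.
move=> rS gS.
have e1 : forall X : {set T}, Rm X = \sum_v (if v \notin X then p v else 0).
  by move=> X; rewrite big_mkcond.
rewrite !e1 [M S]big_mkcond -sumrB; apply: eq_bigr => v _ /=.
rewrite in_setU negb_or.
case vS: (v \in S); case vV: (v \in verts r (G S)) => /=; rewrite ?subr0 ?subrr //.
by rewrite (vertsG_S rS gS vV vS) pr0.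
Qed.

Lemma Rm_end (S : {set T}) : ~~ guard p S -> Rm S = 0.
Proof.
move=> ng; apply: big1 => v vS.
move/existsPn: ng => /(_ v); rewrite vS /= => h.
by apply/eqP; rewrite eq_le leNgt h p0.
Qed.

Lemma Rm_ge0 (S : {set T}) : 0 <= Rm S.
Proof. by apply: sumr_ge0. Qed.

Section Greedy.
Variables (k : nat) (taus : seq (seq {set T})).
Hypotheses (sz : size taus = k) (gd : forall i, (i < k)%N -> guard p (Sj i))
  (ngk : ~~ guard p (Sj k))
  (rhos : forall i, (i < k)%N ->
     exists rho, expanding r (G (Sj i)) (verts r (G (Sj i))) rho /\
                 replaced r E lam (Sj i) rho (nth [::] taus i)).

Lemma L_ge0 j : (j < k)%N -> 0 <= L (Sj j).
Proof. by move=> jk; have [_ /ltW] := ML_pos (Sj_r j) (gd jk). Qed.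

Lemma SjS' j : (j < k)%N -> Sj j.+1 = Sj j :|: verts r (G (Sj j)).
Proof. by move=> jk; rewrite SjS /gstep (gd jk). Qed.

Lemma tau_sum i : (i < k)%N -> \sum_(e <- nth [::] taus i) lam e <= L (Sj i).
Proof.
move=> ik; have [rho [ex [sz' per]]] := rhos ik.
have [xr sr _] := expanding_xp ex.
have [sub _ _] := phase (Sj_r i) (gd ik).
have -> : \sum_(e <- nth [::] taus i) lam e = \sum_(e <- rho) lenS r E lam (Sj i) e.
  rewrite (big_nth set0) [RHS](big_nth set0) sz'; apply: eq_big_nat => m /andP[_ mlt].
  have [h1 h2] := per m mlt; case: (boolP (r \in nth set0 rho m)) => rin.
  - by have [_ ->] := h1 rin.
  - by rewrite (h2 rin) /lenS (negbTE rin).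
rewrite (big_uniq _ (xp_uniq xr)); apply: sum_subset => // x xG.
have h := subsetP (proj1 sub) x xG; exact: (lenS_ge0 E2 Epos (Sj_r i) h).
Qed.

Lemma tau_has i v : (i < k)%N -> v \in verts r (G (Sj i)) -> v != r ->
  has (fun e : {set T} => v \in e) (nth [::] taus i).
Proof.
move=> ik vV vr; have [rho [ex [sz' per]]] := rhos ik.
have [xr sr vis] := expanding_xp ex.
have : has (fun e : {set T} => v \in e) rho.
  by rewrite -in_bigcup_seq; move: vV; rewrite -vis /visited in_setU1 (negbTE vr).
case/(has_nthP set0) => m mlt vm.
apply/(has_nthP set0); exists m; first by rewrite sz'.
have [h1 h2] := per m mlt; case: (boolP (r \in nth set0 rho m)) => rin.
- have [+ _] := h1 rin; rewrite inE => /andP[_ /andP[/eqP eq _]].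
  have : v \in nth set0 rho m :\ r by rewrite in_setD1 vr.
  by rewrite -eq in_setD => /andP[].
- by rewrite (h2 rin).
Qed.

Lemma prefix_sum n : (n <= k)%N ->
  \sum_(e <- flatten (take n taus)) lam e <= \sum_(j < n) L (Sj j).
Proof.
elim: n => [|n IH] nk; first by rewrite take0 big_nil big_ord0.
rewrite (take_nth [::]) ?sz // -cats1 flatten_cat big_cat /= cats0 big_ord_recr /=.
by apply: lerD; [apply: IH; apply: ltnW | apply: tau_sum].
Qed.

Lemma find_phase v n : v \in Sj n -> v != r ->
  exists2 i, (i < n)%N & (v \notin Sj i) && (v \in Sj i.+1).
Proof.
elim: n => [|n IH]; first by rewrite /Siter /= inE => /eqP ->; rewrite eqxx.
move=> vn vr; case: (boolP (v \in Sj n)) => h.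
- by have [i ilt hi] := IH h vr; exists i => //; apply: ltnW.
- by exists n => //; rewrite h vn.
Qed.

Lemma take_le (s : seq {set T}) n : {subset s <= E} ->
  \sum_(e <- take n s) lam e <= \sum_(e <- s) lam e.
Proof.
move=> ss; rewrite -{2}(cat_take_drop n s) big_cat /= lerDl.
by rewrite big_seq; apply: sumr_ge0 => e /mem_drop /ss /Epos /ltW.
Qed.

Variables (sg tail : seq {set T}).
Hypotheses (sgE : sg = flatten taus ++ tail) (sgsub : {subset sg <= E}).

Lemma lamat_bound v : 0 < p v ->
  lam_at r lam sg v <= \sum_(j < k) (if v \notin Sj j then L (Sj j) else 0).
Proof.
move=> pv.
have vr : v != r by apply: contraTneq pv => ->; rewrite pr0 ltxx.
have vk : v \in Sj k.
  apply: contraNT ngk => vk; apply/existsP; exists v; by rewrite vk.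
have [i ik /andP[vi vi1]] := find_phase vk vr.
have vV : v \in verts r (G (Sj i)).
  by move: vi1; rewrite (SjS' ik) in_setU (negbTE vi).
have ht := tau_has ik vV vr.
set X := flatten (take i.+1 taus).
have hX : has (fun e : {set T} => v \in e) X.
  by rewrite /X (take_nth [::]) ?sz // -cats1 flatten_cat has_cat /= cats0 ht orbT.
have sgX : sg = X ++ (flatten (drop i.+1 taus) ++ tail).
  by rewrite sgE catA /X -flatten_cat cat_take_drop.
have XE : {subset X <= E} by move=> e eX; apply: sgsub; rewrite sgX mem_cat eX.
rewrite /lam_at (negbTE vr) sgX find_cat hX takel_cat; last by rewrite -has_find.
apply: le_trans (take_le _ XE) _.
apply: le_trans (prefix_sum ik) _.
rewrite (big_ord_widen k (fun j => L (Sj j)) ik) /=.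
rewrite [X in X <= _]big_mkcond /=.
apply: ler_sum => j _; case: ifP => ji.
- have -> : v \notin Sj j.
    by apply: contra vi; apply: subsetP; apply: Sj_mono; rewrite -ltnS.
  by [].
- by case: ifP => // _; apply: L_ge0.
Qed.

Lemma greedy_bound : cost r lam p sg <= \sum_(j < k) L (Sj j) * Rm (Sj j).
Proof.
apply: (@le_trans _ _ (\sum_v p v * \sum_(j < k) (if v \notin Sj j then L (Sj j) else 0))).
  apply: ler_sum => v _; have := p0 v; rewrite le_eqVlt => /orP[/eqP <-|pv].
  - by rewrite !mul0r.
  - exact: (ler_wpM2l (ltW pv) (lamat_bound pv)).
under eq_bigr => v _ do rewrite big_distrr.
rewrite exchange_big /=; apply: ler_sum; move=> j _.
rewrite big_distrr /= [X in _ <= X]big_mkcond /=; apply: ler_sum; move=> v _.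
by case: ifP => _; rewrite ?mulr0 // mulrC.
Qed.

End Greedy.

Lemma final_bound sg : greedy_output r E lam p A sg -> expanding r E [set: T] sg ->
  cost r lam p sg <= 4 * alpha * cost r lam p sigma.
Proof.
case=> k [taus [tail [sz gd ngk sgE rhos]]] Hexg.
have [_ sgsub _] := expanding_xp Hexg.
have GB := greedy_bound sz gd ngk rhos sgE sgsub.
have [sx ss sv] := sig_xp.
have alpha0 : 0 < alpha by apply: lt_le_trans ltr01 alpha1.
pose a j := if (j < k)%N then Rm (Sj j) * L (Sj j) / (2 * alpha * M (Sj j)) else 0.
have step : forall j, (j < k)%N -> Sj j.+1 = Sj j :|: verts r (G (Sj j)).
  by move=> j jk; rewrite SjS /gstep (gd j jk).
have lm0 : forall v, 0 <= ls v by move=> v; apply: lamat_ge0.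
have a0 : forall j, 0 <= a j.
  move=> j; rewrite /a; case: ifP => // jk.
  have [M0 L0] := ML_pos (Sj_r j) (gd j jk).
  apply: divr_ge0; first by apply: mulr_ge0; [apply: Rm_ge0 | apply: ltW].
  by apply: mulr_ge0; [apply: mulr_ge0; [by [] | apply: ltW] | apply: ltW].
have Rdec : forall j, (j < k)%N -> Rm (Sj j.+1) <= Rm (Sj j).
  move=> j jk; rewrite -subr_ge0 step // RmM ?Sj_r ?gd //.
  by apply: sumr_ge0.
have Rmass : forall j, (j < k)%N -> Rm (Sj j) <= 2 * \sum_(v | a j < ls v) p v.
  move=> j jk; have [M0 L0] := ML_pos (Sj_r j) (gd j jk).
  have H := PC (Sj_r j) (gd j jk) (a0 j).
  have eq : alpha * M (Sj j) * a j = Rm (Sj j) / 2 * L (Sj j).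
    by rewrite /a jk; field; rewrite !gt_eqF.
  rewrite eq ler_pM2r // in H.
  have Rest : \sum_(v | (v \notin Sj j) && ~~ (ls v <= a j)) p v <= \sum_(v | a j < ls v) p v.
    rewrite big_mkcond [X in _ <= X]big_mkcond /=; apply: ler_sum => v _.
    case: ifP => [/andP[_ h]|_]; first by rewrite -ltNge in h; rewrite h.
    by case: ifP.
  move: H Rest; rewrite [Rm (Sj j)](bigID (fun v => ls v <= a j)) /=.
  set x := \sum_(v | _ && (ls v <= a j)) p v; set y := \sum_(v | _ && _) p v.
  lra.
have AB := abstract_bound p0 lm0 a0 Rdec (Rm_ge0 (Sj k)) Rmass.
have EQ : \sum_(j < k) L (Sj j) * Rm (Sj j)
        = 2 * alpha * \sum_(j < k) (Rm (Sj j) - Rm (Sj j.+1)) * a j.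
  rewrite mulr_sumr; apply: eq_bigr => j _.
  have jk := ltn_ord j; have [M0 L0] := ML_pos (Sj_r j) (gd j jk).
  rewrite step // RmM ?Sj_r ?gd // /a jk.
  by field; rewrite !gt_eqF.
apply: le_trans GB _; rewrite EQ /cost.
have h2 : 0 <= 2 * alpha by apply: mulr_ge0 => //; apply: ltW.
apply: le_trans (ler_wpM2l h2 AB) _.
by rewrite le_eqVlt; apply/orP; left; apply/eqP; ring.
Qed.

End Main.

Theorem theorem2 (R : realFieldType) (T : finType) (r : T)
    (E : {set {set T}}) (lam : {set T} -> R) (p : T -> R) (alpha : R)
    (A : (T -> R) -> {set {set T}} -> ({set T} -> R) -> {set {set T}}) :
  (forall e, e \in E -> #|e| = 2%N) ->
  (forall e, e \in E -> 0 < lam e) ->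
  (forall v, connect (adj E) r v) ->
  (forall v, 0 <= p v) -> p r = 0 -> \sum_v p v = 1 ->
  1 <= alpha -> mds_approx r alpha A ->
  forall sigma_g : seq {set T},
    greedy_output r E lam p A sigma_g ->
    expanding r E [set: T] sigma_g ->
    forall sigma : seq {set T}, expanding r E [set: T] sigma ->
      cost r lam p sigma_g <= 4 * alpha * cost r lam p sigma.
Proof.
move=> E2 Epos _ p0 pr0 _ a1 mds sg Hg Hexg sigma Hex.
exact: (final_bound E2 Epos p0 pr0 a1 mds Hex Hg Hexg).
Qed.
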